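(* Let $E=[n]$, let $f:2^E\to\mathbb{Z}_{\ge0}$ be a nonnegative integer-valued submodular function with $M:=\|f\|_\infty<\infty$, and let $d\in\mathbb{Z}^n$ be an integer direction with at least one positive entry. Let $\hat E=E\cup\{n+1\}$ and, for $C\in\mathbb{R}$, define $\hat f(\cdot;C):2^{\hat E}\to\mathbb{R}$ by \[ \hat f(S;C)=\begin{cases} f(S) & \text{if } n+1\notin S,\\ f(S\setminus\{n+1\})+C & \text{if } n+1\in S\subsetneq \hat E,\\ f(E) & \text{if } S=\hat E.\end{cases} \] Let $\hat d=(d_1,\dots,d_n,0)\in\mathbb{Z}^{n+1}$ and let $e_{n+1}$ be the $(n+1)$-st standard basis vector. If $C>M\|d\|_1$, then \[ \max\bigl\{\lambda_1:\ \lambda_1,\lambda_2\in\mathbb{R},\ \lambda_1\hat d+\lambda_2 e_{n+1}\in B(\hat f(\cdot;C))\bigr\} =\max\bigl\{\lambda\in\mathbb{R}:\ \lambda d\in P(f)\bigr\}. \]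
   Context: For a set function $g$ on a finite ground set $V$ and $x\in\mathbb{R}^V$, write $x(S)=\sum_{i\in S}x_i$. The extended polymatroid is $P(g)=\{x\in\mathbb{R}^V: x(S)\le g(S)\ \forall S\subseteq V\}$ and the base polytope is $B(g)=\{x\in P(g): x(V)=g(V)\}$. $\|d\|_1=\sum_i|d_i|$. *)

(* Defs.v *)
From HB Require Import structures.
From mathcomp Require Import all_boot all_order all_algebra.
From mathcomp Require Import reals.
Set Implicit Arguments. Unset Strict Implicit. Unset Printing Implicit Defensive.
Import Order.TTheory GRing.Theory Num.Theory.
Local Open Scope ring_scope.

(* Ground set E = [n] is modelled by 'I_n; hat E = E ∪ {n+1} by 'I_n.+1,
   the new element n+1 being ord_max. Vectors x ∈ R^V are functions V -> R. *)

Definition xsum (R : realType) (V : finType) (x : V -> R) (S : {set V}) : R :=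
  \sum_(i in S) x i.

Definition in_P (R : realType) (V : finType) (g : {set V} -> R) (x : V -> R) : Prop :=
  forall S : {set V}, xsum x S <= g S.

Definition in_B (R : realType) (V : finType) (g : {set V} -> R) (x : V -> R) : Prop :=
  in_P g x /\ xsum x setT = g setT.

Definition submodular (V : finType) (f : {set V} -> nat) : Prop :=
  forall S T : {set V}, (f (S :|: T) + f (S :&: T) <= f S + f T)%N.

Definition supnorm (V : finType) (f : {set V} -> nat) : nat := \max_(S : {set V}) f S.

Definition norm1 (n : nat) (d : 'I_n -> int) : int := \sum_(i < n) `|d i|.

Definition drop_last (n : nat) (S : {set 'I_n.+1}) : {set 'I_n} :=
  [set i : 'I_n | widen_ord (leqnSn n) i \in S].

Definition fhat (R : realType) (n : nat) (f : {set 'I_n} -> nat) (C : R)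
  (S : {set 'I_n.+1}) : R :=
  if ord_max \notin S then (f (drop_last S))%:R
  else if S == setT then (f setT)%:R
  else (f (drop_last S))%:R + C.

Definition dhat (R : realType) (n : nat) (d : 'I_n -> int) (i : 'I_n.+1) : R :=
  match unlift ord_max i with Some j => (d j)%:~R | None => 0 end.

Definition e_last (R : realType) (n : nat) (i : 'I_n.+1) : R := (i == ord_max)%:R.

(* Main.v *)
Require Import Defs.
From HB Require Import structures.
From mathcomp Require Import all_boot all_order all_algebra.
From mathcomp Require Import reals.
From mathcomp Require Import lra.
Import Order.TTheory GRing.Theory Num.Theory.
Local Open Scope ring_scope.

Section Aux.
Variables (R : realType) (n : nat) (d : 'I_n -> int).

Definition rd (i : 'I_n) : R := (d i)%:~R.
Definition ds (S : {set 'I_n}) : R := \sum_(i in S) rd i.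

Lemma dsE S : ds S = \sum_i (i \in S)%:R * rd i.
Proof.
rewrite /ds big_mkcond /=; apply: eq_bigr => i _.
by case: (i \in S); rewrite ?mul1r ?mul0r.
Qed.

Lemma xsum_l (l : R) S : xsum (fun i => l * rd i) S = l * ds S.
Proof. by rewrite /xsum /ds mulr_sumr. Qed.

Lemma lift_widen (i : 'I_n) : lift ord_max i = widen_ord (leqnSn n) i.
Proof. by apply: val_inj => /=; rewrite /bump leqNgt ltn_ord. Qed.

Lemma dhat_widen (i : 'I_n) : @dhat R n d (widen_ord (leqnSn n) i) = rd i.
Proof. by rewrite /dhat -lift_widen liftK. Qed.

Lemma elast_widen (i : 'I_n) : @e_last R n (widen_ord (leqnSn n) i) = 0.
Proof.
rewrite /e_last; case: eqP => // /(congr1 val) /= H.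
by move: (ltn_ord i); rewrite H ltnn.
Qed.

Lemma xsum_hat (l1 l2 : R) S :
  xsum (fun i => l1 * @dhat R n d i + l2 * @e_last R n i) S =
  l1 * ds (drop_last S) + (if ord_max \in S then l2 else 0).
Proof.
rewrite /xsum big_mkcond big_ord_recr /=.
rewrite /dhat unlift_none /e_last eqxx mulr0 add0r mulr1.
congr (_ + _).
rewrite dsE mulr_sumr; apply: eq_bigr => i _.
rewrite /drop_last inE -lift_widen liftK eq_sym (negPf (neq_lift _ _)) mulr0 addr0.
by case: (_ \in S); rewrite ?mul1r ?mul0r ?mulr0.
Qed.

Lemma drop_lastT : drop_last [set: 'I_n.+1] = [set: 'I_n].
Proof. by apply/setP => i; rewrite !inE. Qed.

End Aux.

Theorem lemma3 (R : realType) (n : nat) (f : {set 'I_n} -> nat)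
    (d : 'I_n -> int) (C : R) :
    submodular f ->
    (exists i, 0 < d i) ->
    (supnorm f)%:R * (norm1 d)%:~R < C ->
    exists lam : R,
      [/\ in_P (fun S => (f S)%:R) (fun i => lam * (d i)%:~R),
          (forall l : R, in_P (fun S => (f S)%:R) (fun i => l * (d i)%:~R) -> l <= lam),
          (exists l2 : R,
             in_B (fhat f C) (fun i => lam * @dhat R n d i + l2 * @e_last R n i)) &
          (forall l1 l2 : R,
             in_B (fhat f C) (fun i => l1 * @dhat R n d i + l2 * @e_last R n i) -> l1 <= lam)].
Proof.
move=> _ [i0 di0] HC.
pose F (S : {set 'I_n}) : R := (f S)%:R.
pose M : R := (supnorm f)%:R.
have FM S : F S <= M by rewrite ler_nat /supnorm; exact: (leq_bigmax S).
have F0 S : 0 <= F S by rewrite ler0n.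
have rd0 : 1 <= rd R n d i0 by rewrite /rd ler1z.
have ds0 : 0 < ds R n d [set i0] by rewrite /ds big_set1; lra.
have [Sm' dSm Hmin] : exists2 S, 0 < ds R n d S &
    forall T, 0 < ds R n d T -> F S / ds R n d S <= F T / ds R n d T.
  by case: (@arg_minP _ _ _ [set i0] (fun S => 0 < ds R n d S) (fun S => F S / ds R n d S) ds0) => S HS H; exists S.
pose b := F Sm' / ds R n d Sm'.
have b0 : 0 <= b by rewrite /b divr_ge0 // ltW.
have inPb : forall l, in_P (fun S => (f S)%:R) (fun i => l * (d i)%:~R) <->
    forall S, l * ds R n d S <= F S.
  move=> l; rewrite /in_P.
  have E : forall S, xsum (fun i => l * (d i)%:~R) S = l * ds R n d S.
    by move=> S; exact: (xsum_l R n d l S).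
  by split=> H S; have := H S; rewrite E.
have Pb : forall S, b * ds R n d S <= F S.
  move=> S; case: (ltrP 0 (ds R n d S)) => hS.
    by rewrite -ler_pdivlMr // Hmin.
  have : b * ds R n d S <= 0 by rewrite mulr_ge0_le0.
  by have := F0 S; lra.
have maxb : forall l, (forall S, l * ds R n d S <= F S) -> l <= b.
  by move=> l H; rewrite /b ler_pdivlMr //; exact: H.
exists b; split.
- by apply/inPb.
- by move=> l /inPb; exact: maxb.
- exists (F setT - b * ds R n d setT); split; last first.
    by rewrite xsum_hat drop_lastT /fhat in_setT /= eqxx /F; lra.
  move=> S; rewrite xsum_hat /fhat.
  case: (boolP (ord_max \in S)) => hS /=; last by rewrite addr0; exact: Pb.
  case: eqP => [->|_]; first by rewrite drop_lastT /F; lra.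
  set S' := drop_last S.
  pose pos i := if 0 <= rd R n d i then rd R n d i else 0.
  pose neg i := if 0 <= rd R n d i then 0 else - rd R n d i.
  have H1 : ds R n d S' - ds R n d setT <= \sum_i neg i.
    rewrite !dsE -sumrB; apply: ler_sum => i _; rewrite in_setT /neg.
    case: (i \in S'); case: ifP => h; rewrite /= ?mul1r ?subrr ?mul0r; lra.
  pose P := [set i | 0 < d i].
  have H2 : ds R n d P = \sum_i pos i.
    rewrite dsE; apply: eq_bigr => i _; rewrite inE /pos /rd ler0z.
    have [h|h] := boolP (0 < d i); first by rewrite (ltW h) mul1r.
    rewrite mul0r; case: ifP => // h2; suff -> : d i = 0 by [].
    by apply/eqP; rewrite eq_le h2 andbT leNgt.
  have H3 : 1 <= \sum_i pos i.
    rewrite (bigD1 i0) //= {1}/pos ifT; last by lra.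
    have : 0 <= \sum_(i | i != i0) pos i.
      by apply: sumr_ge0 => i _; rewrite /pos; case: ifP => h //; lra.
    lra.
  have H4 : (norm1 d)%:~R = \sum_i pos i + \sum_i neg i :> R.
    rewrite /norm1 rmorph_sum -big_split; apply: eq_bigr => i _ /=.
    rewrite intr_norm /pos /neg -/(rd R n d i).
    by case: ger0P => h; lra.
  have Hn0 : 0 <= \sum_i neg i.
    by apply: sumr_ge0 => i _; rewrite /neg; case: ifP => h //; lra.
  have HbP := Pb P; have HMP := FM P; have HFT := FM setT; have HF' := F0 S'.
  rewrite H2 in HbP; rewrite H4 in HC.
  set Np := \sum_i pos i in H3 HbP HC; set Nn := \sum_i neg i in H1 Hn0 HC.
  have e1 : b * (ds R n d S' - ds R n d setT) <= b * Nn by rewrite ler_wpM2l.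
  have e2 : b * Nn <= b * Np * Nn.
    rewrite -mulrA ler_wpM2l //; rewrite -[X in X <= _]mul1r ler_wpM2r //.
  have e3 : b * Np * Nn <= M * Nn by rewrite ler_wpM2r //; lra.
  have e4 : M <= M * Np by rewrite -[X in X <= _]mulr1 ler_wpM2l //; lra.
  rewrite mulrDr in HC.
  rewrite /F in HFT HF' e4 HC *; rewrite /M in e3 e4 HC.
  lra.
- move=> l1 l2 [HP _]; apply: maxb => S.
  pose T := [set j : 'I_n.+1 | if unlift ord_max j is Some i then i \in S else false].
  have := HP T; rewrite xsum_hat /fhat.
  have hT : ord_max \notin T by rewrite inE unlift_none.
  have dT : drop_last T = S.
    apply/setP => i; rewrite /drop_last !inE -lift_widen liftK //.
  by rewrite (negPf hT) /= addr0 dT.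
Qed.
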